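(* Let $\phi$ be a monotone Boolean formula in the variables $x_1,\dots,x_n$ defining a set $S \subseteq \{0,1\}^n$, and let $Q \subseteq [0,1]^n$ be any convex set containing $S$. If $Q$ satisfies all monotone inequalities of pitch at most $p$ that are valid for $S$, then $\phi(Q)$ satisfies all monotone inequalities of pitch at most $p+1$ that are valid for $S$. Moreover, if $Q$ is a polytope defined by an extended formulation of size $\sigma$, then $\phi(Q)$ is a polytope that can be defined by an extended formulation of size $|\phi|\sigma$.
   Context: Boolean formulas are built from input variables $x_1,\dots,x_n$ using $\wedge$, $\vee$, $\neg$, and interpreted as functions $\{0,1\}^n\to\{0,1\}$; $\phi$ defines $S=\{x\in\{0,1\}^n:\phi(x)=1\}$. A formula is monotone if it contains no negations. The size $|\phi|$ is the total number of occurrences of input variables. For such $\phi$ and a convex $Q\subseteq[0,1]^n$, $\phi(Q)$ is defined recursively: a variable $x_i$ is replaced by $\{x \in Q : x_i = 1\}$ (a negated $\neg x_i$, if present, by $\{x\in Q: x_i=0\}$); a conjunction by the intersection of the corresponding sets; a disjunction by the convex hull of the union of the corresponding sets. A monotone inequality in standard form is $\sum_{i \in I^+} c_i x_i \ge \delta$ with $I^+\subseteq[n]$, $c_i \ge 0$, $\delta \ge 0$. Its pitch is the smallest number $p$ such that $\sum_{j\in J} c_j \ge \delta$ for every $J \subseteq \operatorname{supp}(c)$ with $|J|\ge p$. An extended formulation of size $m$ of a polytope $P\subseteq\mathbb{R}^n$ is a description $P=\{x:\exists y\in\mathbb{R}^d,\ Ay\ge b,\ x=Ty+t\}$ with $A$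 having $m$ rows. *)

(* Defs.v *)
(* Points of R^n are column vectors 'cV[R]_n; coordinate i of x is x i 0. *)
From HB Require Import structures.
From mathcomp Require Import all_boot all_order all_algebra.
Set Implicit Arguments. Unset Strict Implicit. Unset Printing Implicit Defensive.
Import Order.TTheory GRing.Theory Num.Theory.
Local Open Scope ring_scope.

Inductive mformula (n : nat) : Type :=
  | FVar of 'I_n
  | FAnd of mformula n & mformula n
  | FOr of mformula n & mformula n.

Fixpoint feval n (f : mformula n) (b : 'I_n -> bool) : bool :=
  match f with
  | FVar i => b i
  | FAnd f1 f2 => feval f1 b && feval f2 b
  | FOr f1 f2 => feval f1 b || feval f2 b
  end.

Fixpoint fsize n (f : mformula n) : nat :=
  match f with
  | FVar _ => 1%N
  | FAnd f1 f2 => (fsize f1 + fsize f2)%N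
  | FOr f1 f2 => (fsize f1 + fsize f2)%N
  end.

Section Geometry.
Variables (R : realFieldType) (n : nat).
Local Notation pt := 'cV[R]_n.

Definition binary_point (x : pt) : Prop := forall i, x i 0 = 0 \/ x i 0 = 1.

Definition fset_of (f : mformula n) : pt -> Prop :=
  fun x => binary_point x /\ feval f (fun i => x i 0 == 1).

Definition unit_cube : pt -> Prop := fun x => forall i, 0 <= x i 0 <= 1.

Definition convex (Q : pt -> Prop) : Prop :=
  forall x y (t : R), Q x -> Q y -> 0 <= t <= 1 -> Q (t *: x + (1 - t) *: y).

Definition conv (A : pt -> Prop) : pt -> Prop :=
  fun x => exists (k : nat) (lam : 'I_k -> R) (pts : 'I_k -> pt),
    [/\ (forall j, 0 <= lam j), \sum_j lam j = 1, (forall j, A (pts j))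
      & x = \sum_j lam j *: pts j].

Fixpoint fapply (f : mformula n) (Q : pt -> Prop) : pt -> Prop :=
  match f with
  | FVar i => fun x => Q x /\ x i 0 = 1
  | FAnd f1 f2 => fun x => fapply f1 Q x /\ fapply f2 Q x
  | FOr f1 f2 => conv (fun x => fapply f1 Q x \/ fapply f2 Q x)
  end.

(* Monotone inequality in standard form  sum_i c_i x_i >= delta,
   with c_i >= 0 (I^+ = supp c) and delta >= 0. *)
Definition monotone_ineq (c : pt) (delta : R) : Prop :=
  (forall i, 0 <= c i 0) /\ 0 <= delta.

Definition ineq_lhs (c x : pt) : R := \sum_i c i 0 * x i 0.

Definition supp (c : pt) : {set 'I_n} := [set i | c i 0 != 0].

Definition pitch_cond (c : pt) (delta : R) (p : nat) : bool :=
  [forall J : {set 'I_n},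
     ((J \subset supp c) && (p <= #|J|)%N) ==> (delta <= \sum_(j in J) c j 0)].

Lemma pitch_exists (c : pt) (delta : R) : exists p, pitch_cond c delta p.
Proof.
exists n.+1; apply/forallP => J; apply/implyP => /andP [_ H].
have := max_card J; rewrite card_ord => H2.
by move: (leq_trans H H2); rewrite ltnn.
Qed.

Definition pitch (c : pt) (delta : R) : nat := ex_minn (pitch_exists c delta).

Definition valid_for (A : pt -> Prop) (c : pt) (delta : R) : Prop :=
  forall x, A x -> delta <= ineq_lhs c x.

Definition satisfies_pitch (Q S : pt -> Prop) (p : nat) : Prop :=
  forall c delta, monotone_ineq c delta -> (pitch c delta <= p)%N ->
    valid_for S c delta -> valid_for Q c delta.

Definition ext_formulation (P : pt -> Prop) (m : nat) : Prop :=
  exists (d : nat) (A : 'M[R]_(m, d)) (b : 'cV[R]_m) (T : 'M[R]_(n, d)) (t : pt),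
    forall x, P x <-> exists y : 'cV[R]_d,
      (forall i, b i 0 <= (A *m y) i 0) /\ x = T *m y + t.

Definition polytope (P : pt -> Prop) : Prop :=
  exists (k : nat) (pts : 'I_k -> pt),
    forall x, P x <-> conv (fun z => exists j, z = pts j) x.

End Geometry.

(* Main.v *)
Require Import Defs.
From HB Require Import structures.
From mathcomp Require Import all_boot all_order all_algebra.
From mathcomp Require Import ring lra zify.
From Stdlib Require Classical_Prop.
Set Implicit Arguments. Unset Strict Implicit. Unset Printing Implicit Defensive.
Import Order.TTheory GRing.Theory Num.Theory.
Local Open Scope ring_scope.
Notation classic := Classical_Prop.classic.

Section Part1.
Variables (R : realFieldType) (n : nat).
Local Notation pt := 'cV[R]_n.

Lemma pitch_condP (c : pt) d : pitch_cond c d (pitch c d).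
Proof. rewrite /pitch; by case: ex_minnP. Qed.

Lemma pitch_min (c : pt) d q : pitch_cond c d q -> (pitch c d <= q)%N.
Proof. rewrite /pitch; case: ex_minnP => m _ H; exact: H. Qed.

Lemma pitch_cond_mono (c : pt) d p q : (p <= q)%N -> pitch_cond c d p -> pitch_cond c d q.
Proof.
move=> pq /forallP H; apply/forallP => J; apply/implyP => /andP [HJ HqJ].
by move: (H J) => /implyP; apply; rewrite HJ (leq_trans pq HqJ).
Qed.

Lemma lhs_conv k (c : pt) (lam : 'I_k -> R) (pts : 'I_k -> pt) :
  ineq_lhs c (\sum_j lam j *: pts j) = \sum_j lam j * ineq_lhs c (pts j).
Proof.
rewrite /ineq_lhs.
under eq_bigr => i _ do rewrite summxE mulr_sumr.
rewrite exchange_big /=; apply: eq_bigr => j _.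
rewrite mulr_sumr; apply: eq_bigr => i _; rewrite mxE; ring.
Qed.

Lemma lhs_ge0 (c x : pt) : (forall i, 0 <= c i 0) -> unit_cube x -> 0 <= ineq_lhs c x.
Proof.
move=> Hc Hx; apply: sumr_ge0 => i _; apply: mulr_ge0 => //.
by case/andP: (Hx i).
Qed.

Lemma conv_cube (A : pt -> Prop) x : (forall y, A y -> unit_cube y) -> conv A x -> unit_cube x.
Proof.
move=> HA [k [lam [pts [Hl Hs Hp ->]]]] i.
rewrite summxE; apply/andP; split.
  apply: sumr_ge0 => j _; rewrite mxE; apply: mulr_ge0 => //.
  by case/andP: (HA _ (Hp j) i).
rewrite -Hs; apply: ler_sum => j _; rewrite mxE.
case/andP: (HA _ (Hp j) i) => _ H1.
by rewrite -[X in _ <= X]mulr1; apply: ler_wpM2l.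
Qed.

Lemma fapply_cube (f : mformula n) (Q : pt -> Prop) x :
  (forall y, Q y -> unit_cube y) -> fapply f Q x -> unit_cube x.
Proof.
move=> HQ; elim: f x => [i|f1 IH1 f2 IH2|f1 IH1 f2 IH2] x /=.
- by case=> /HQ.
- by case=> /IH1.
- apply: conv_cube => y [/IH1|/IH2] //.
Qed.

Fixpoint fdual (f : mformula n) (b : 'I_n -> bool) : bool :=
  match f with
  | FVar i => b i
  | FAnd f1 f2 => fdual f1 b || fdual f2 b
  | FOr f1 f2 => fdual f1 b && fdual f2 b
  end.

Lemma fdualE f b : fdual f b = ~~ feval f (fun i => ~~ b i).
Proof.
elim: f => [i|f1 IH1 f2 IH2|f1 IH1 f2 IH2] /=; first by rewrite negbK.
  by rewrite IH1 IH2 negb_and.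
by rewrite IH1 IH2 negb_or.
Qed.

Lemma feval_ext (f : mformula n) b1 b2 : (forall i, b1 i = b2 i) -> feval f b1 = feval f b2.
Proof. by move=> H; elim: f => [i|f1 IH1 f2 IH2|f1 IH1 f2 IH2] /=; rewrite ?IH1 ?IH2. Qed.

Lemma part1 (phi : mformula n) (Q : pt -> Prop) (p : nat) :
  (forall x, Q x -> unit_cube x) ->
  satisfies_pitch Q (fset_of phi) p ->
  satisfies_pitch (fapply phi Q) (fset_of phi) p.+1.
Proof.
move=> Hcube HQ c d [Hc Hd] Hp Hval.
have Hface : forall i, c i 0 != 0 -> forall x, Q x -> x i 0 = 1 -> d <= ineq_lhs c x.
  move=> i Hi x Qx xi1.
  have Hsplit : ineq_lhs c x = c i 0 * x i 0 + \sum_(j | j != i) c j 0 * x j 0.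
    by rewrite /ineq_lhs (bigD1 i).
  have Hrest : 0 <= \sum_(j | j != i) c j 0 * x j 0.
    apply: sumr_ge0 => j _; apply: mulr_ge0 => //; by case/andP: (Hcube _ Qx j).
  case: (lerP d (c i 0)) => Hci.
    by rewrite Hsplit xi1 mulr1; apply: (le_trans Hci); rewrite lerDl.
  pose c' : pt := \matrix_(j, k) (if j == i then 0 else c j k).
  have c'E : forall j, c' j 0 = if j == i then 0 else c j 0 by move=> j; rewrite mxE.
  have lhs' : forall y : pt, ineq_lhs c' y = \sum_(j | j != i) c j 0 * y j 0.
    move=> y; rewrite /ineq_lhs (bigD1 i) //= c'E eqxx mul0r add0r.
    by apply: eq_bigr => j /negbTE ji; rewrite c'E ji.
  pose d' := d - c i 0.
  have Hm : monotone_ineq c' d'.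
    split; first by move=> j; rewrite c'E; case: ifP.
    by rewrite subr_ge0 ltW.
  have Hp' : (pitch c' d' <= p)%N.
    apply: pitch_min; apply/forallP => J; apply/implyP => /andP [HJ HpJ].
    have iJ : i \notin J.
      apply/negP => iJ; move/subsetP: HJ => /(_ i iJ); by rewrite inE c'E eqxx eqxx.
    have HJ2 : (i |: J) \subset supp c.
      rewrite subUset sub1set inE Hi /=; apply/subsetP => j jJ.
      move/subsetP: HJ => /(_ j jJ); rewrite !inE c'E; case: (j == i) => //; by rewrite eqxx.
    have := pitch_condP c d => /forallP /(_ (i |: J)) /implyP.
    rewrite HJ2 cardsU1 iJ /= add1n.
    move=> /(_ (leq_trans Hp (HpJ : (p.+1 <= #|J|.+1)%N))).
    rewrite (bigD1 i) ?setU11 //= => H.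
    rewrite lerBlDl; apply: (le_trans H); rewrite lerD2l le_eqVlt; apply/orP; left.
    apply/eqP; apply: eq_big => j.
      by rewrite !inE; case: (j =P i) => [->|_] /=; rewrite ?eqxx ?(negbTE iJ) ?andbT ?andbF.
    by move=> /andP [_ /negbTE ji]; rewrite c'E ji.
  have Hv : valid_for (fset_of phi) c' d'.
    move=> y Sy; have := Hval y Sy; rewrite lhs' /ineq_lhs (bigD1 i) //=.
    case: Sy => /(_ i) [] -> _; first by rewrite mulr0 add0r => H; apply: (le_trans _ H); rewrite gerBl.
    by rewrite mulr1 lerBlDl.
  have := HQ _ _ Hm Hp' Hv x Qx; rewrite lhs' Hsplit xi1 mulr1.
  by rewrite lerBlDl.
case: (lerP d 0) => Hd0.
  move=> x Hx; apply: (le_trans Hd0); apply: lhs_ge0 => //.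
  exact: fapply_cube Hx.
have Hgood : fdual phi (fun i => c i 0 != 0).
  rewrite fdualE; apply/negP => Hf.
  pose z : pt := \col_i (if c i 0 == 0 then 1 else 0).
  have Sz : fset_of phi z.
    split; first by move=> i; rewrite mxE; case: ifP; [right|left].
    rewrite (@feval_ext _ _ (fun i => ~~ (c i 0 != 0))) // => i.
    by rewrite mxE negbK; case: ifP => _; rewrite ?eqxx // eq_sym oner_eq0.
  have := Hval z Sz; rewrite /ineq_lhs big1 => [|i _]; first by rewrite leNgt Hd0.
  by rewrite mxE; case: ifP => [/eqP ->|]; rewrite ?mul0r ?mulr0.
elim: phi Hgood {Hval HQ} => [i|f1 IH1 f2 IH2|f1 IH1 f2 IH2] /= Hg x.
- by case=> Qx xi; apply: (Hface i).
- by case/orP: Hg => [/IH1 H|/IH2 H] [H1 H2]; [apply: H|apply: H].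
- case/andP: Hg => /IH1 H1 /IH2 H2 [k [lam [pts [Hl Hs Hpj ->]]]].
  rewrite lhs_conv -[d]mul1r -Hs mulr_suml; apply: ler_sum => j _.
  apply: ler_wpM2l => //; by case: (Hpj j) => [/H1|/H2].
Qed.
End Part1.

Lemma split_lshift m k (j : 'I_m) : split (lshift k j) = inl j.
Proof. exact: (unsplitK (inl j)). Qed.
Lemma split_rshift m k (j : 'I_k) : split (rshift m j) = inr j.
Proof. exact: (unsplitK (inr j)). Qed.

Section Conv.
Variables (R : realFieldType) (n : nat).
Local Notation pt := 'cV[R]_n.

Lemma conv_pt (A : pt -> Prop) x : A x -> conv A x.
Proof.
move=> Ax; exists 1%N, (fun _ => 1), (fun _ => x); split.
- by move=> _; apply: ler01.
- by rewrite big_ord1.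
- by [].
- by rewrite big_ord1 scale1r.
Qed.

Lemma conv_two (A : pt -> Prop) x1 x2 a : conv A x1 -> conv A x2 -> 0 <= a <= 1 ->
  conv A (a *: x1 + (1 - a) *: x2).
Proof.
move=> [k1 [l1 [p1 [Hl1 Hs1 Hp1 ->]]]] [k2 [l2 [p2 [Hl2 Hs2 Hp2 ->]]]] /andP [a0 a1].
exists (k1 + k2)%N, (fun j => match split j with inl j1 => a * l1 j1 | inr j2 => (1 - a) * l2 j2 end),
  (fun j => match split j with inl j1 => p1 j1 | inr j2 => p2 j2 end).
split.
- move=> j; case: split => j'; apply: mulr_ge0 => //; by rewrite subr_ge0.
- by rewrite big_split_ord /=; under eq_bigr => j _ do rewrite split_lshift;
  under [X in _ + X]eq_bigr => j _ do rewrite split_rshift; rewrite -!mulr_sumr Hs1 Hs2; ring.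
- by move=> j; case: split.
- symmetry; rewrite big_split_ord /=; under eq_bigr => j _ do rewrite split_lshift;
  under [X in _ + X]eq_bigr => j _ do rewrite split_rshift.
  by rewrite !scaler_sumr; congr (_ + _); apply: eq_bigr => j _; rewrite scalerA.
Qed.

End Conv.

Section Poly.
Variables (R : realFieldType) (n m d : nat) (A : 'M[R]_(m, d)) (b : 'cV[R]_m)
  (T : 'M[R]_(n, d)) (t : 'cV[R]_n).

Definition feas (y : 'cV[R]_d) := forall k, b k 0 <= (A *m y) k 0.
Definition tight (y : 'cV[R]_d) : {set 'I_m} := [set k | (A *m y) k 0 == b k 0].

Lemma addE p q (X Y : 'M[R]_(p, q)) i j : (X + Y) i j = X i j + Y i j.
Proof. by rewrite mxE. Qed.
Lemma scaleE p q c (X : 'M[R]_(p, q)) i j : (c *: X) i j = c * X i j.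
Proof. by rewrite mxE. Qed.
Lemma oppE p q (X : 'M[R]_(p, q)) i j : (- X) i j = - X i j.
Proof. by rewrite mxE. Qed.

Lemma mulmx_comb p (M : 'M[R]_(p, d)) (u v : 'cV[R]_d) (c : R) i :
  (M *m (u + c *: v)) i 0 = (M *m u) i 0 + c * (M *m v) i 0.
Proof. by rewrite mulmxDr -scalemxAr addE scaleE. Qed.

Lemma mulmx_sumE p k (M : 'M[R]_(p, d)) (lam : 'I_k -> R) (y : 'I_k -> 'cV[R]_d) i :
  (M *m (\sum_j lam j *: y j)) i 0 = \sum_j lam j * (M *m y j) i 0.
Proof. by rewrite mulmx_sumr summxE; apply: eq_bigr => j _; rewrite -scalemxAr scaleE. Qed.

Hypothesis Hbd : forall y, feas y -> unit_cube (T *m y + t).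

Lemma rec_dir (y w : 'cV[R]_d) : feas y -> (forall k, 0 <= (A *m w) k 0) -> T *m w = 0.
Proof.
move=> Fy Hw; apply/matrixP => r j; rewrite ord1 [RHS]mxE.
set a := (T *m w) r 0.
have Hfe : forall mu, 0 <= mu -> feas (y + mu *: w).
  move=> mu mu0 k; rewrite mulmx_comb -[b k 0]addr0; apply: lerD => //.
  exact: mulr_ge0.
have cb : forall mu, 0 <= mu -> 0 <= (T *m y) r 0 + mu * a + t r 0 <= 1.
  by move=> mu mu0; have := Hbd (Hfe _ mu0) r; rewrite addE mulmx_comb.
have := cb 0 (lexx _); rewrite mul0r addr0 => cb0.
case: (ltrgtP a 0) => Ha //.
- have mu0 : 0 <= - 2 / a.
    have ai : a^-1 < 0 by rewrite invr_lt0.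
    lra.
  have := cb _ mu0; have -> : -2 / a * a = -2 by field; rewrite lt_eqF.
  lra.
- have mu0 : 0 <= 2 / a.
    have ai : 0 < a^-1 by rewrite invr_gt0.
    lra.
  have := cb _ mu0; have -> : 2 / a * a = 2 by field; rewrite gt_eqF.
  lra.
Qed.

Lemma step (y w : 'cV[R]_d) : feas y -> T *m w != 0 ->
  (forall k, k \in tight y -> (A *m w) k 0 = 0) ->
  exists mu, [/\ 0 < mu, feas (y + mu *: w) & tight y \proper tight (y + mu *: w)].
Proof.
move=> Fy Tw Hw.
have [k0 Hk0] : exists k, (A *m w) k 0 < 0.
  case: (boolP [exists k, (A *m w) k 0 < 0]) => [/existsP //|/existsPn H].
  have H2 := @rec_dir y w Fy.
  suff: T *m w = 0 by move=> /eqP; rewrite (negbTE Tw).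
  by apply: H2 => k; rewrite leNgt H.
pose mu k := ((A *m y) k 0 - b k 0) / (- (A *m w) k 0).
case: (@arg_minP _ R _ k0 [pred k | (A *m w) k 0 < 0] mu Hk0) => ks Hks Hmin.

have ks_nt : ks \notin tight y.
  by apply/negP => /Hw H; move: Hks; rewrite inE H ltxx.
have slack : 0 < (A *m y) ks 0 - b ks 0.
  by move: ks_nt; rewrite inE subr_gt0 lt_def eq_sym => ->; rewrite Fy.
have muks : mu ks * (A *m w) ks 0 = - ((A *m y) ks 0 - b ks 0).
  rewrite /mu; field; by rewrite lt_eqF.
exists (mu ks); split.
- by apply: divr_gt0 => //; rewrite oppr_gt0.
- move=> k; rewrite mulmx_comb; case: (lerP 0 ((A *m w) k 0)) => Hk.
    by rewrite -[b k 0]addr0; apply: lerD => //; apply: mulr_ge0 => //; apply: ltW; apply: divr_gt0 => //; rewrite oppr_gt0.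
  have := Hmin k Hk; rewrite /mu => H.
  have Hk' : 0 < - (A *m w) k 0 by rewrite oppr_gt0.
  have := ler_wpM2r (ltW Hk') H; rewrite divfK ?lt0r_neq0 //.
  set M := _ / _; lra.
- apply/properP; split.
    apply/subsetP => k; rewrite !inE => /eqP Hk; rewrite mulmx_comb Hw ?mulr0 ?addr0 ?Hk //.
    by rewrite inE Hk.
  exists ks => //; rewrite inE mulmx_comb muks; apply/eqP; ring.
Qed.

Lemma card_lt (y y' : 'cV[R]_d) : tight y \proper tight y' -> (#|~: tight y'| < #|~: tight y|)%N.
Proof.
move=> /proper_card H; have h1 := cardsC (tight y); have h2 := cardsC (tight y'); lia.
Qed.


Lemma feas_conv k (lam : 'I_k -> R) (ys : 'I_k -> 'cV[R]_d) :
  (forall j, 0 <= lam j) -> \sum_j lam j = 1 -> (forall j, feas (ys j)) ->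
  feas (\sum_j lam j *: ys j).
Proof.
move=> Hl Hs Hy kk; rewrite mulmx_sumE -[b kk 0]mul1r -Hs mulr_suml.
by apply: ler_sum => j _; apply: ler_wpM2l; [exact: Hl | exact: Hy].
Qed.

Lemma img_conv k (lam : 'I_k -> R) (ys : 'I_k -> 'cV[R]_d) :
  \sum_j lam j = 1 ->
  \sum_j lam j *: (T *m ys j + t) = T *m (\sum_j lam j *: ys j) + t.
Proof.
move=> Hs; rewrite mulmx_sumr; under eq_bigr => j _ do rewrite scalerDr.
rewrite big_split /= -scaler_suml Hs scale1r; congr (_ + _).
by apply: eq_bigr => j _; rewrite scalemxAr.
Qed.

Lemma main_poly : exists (k : nat) (pts : 'I_k -> 'cV[R]_n),
  (forall j, exists y, feas y /\ pts j = T *m y + t) /\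
  (forall y, feas y -> conv (fun z => exists j, z = pts j) (T *m y + t)).
Proof.
case: (classic (exists y, feas y)) => [[y0 Fy0]|Hno]; last first.
  exists 0%N, (fun _ => 0); split; first by case.
  by move=> y Fy; case: Hno; exists y.
have : forall I : {set 'I_m}, exists yI, feas yI /\
    ((exists y, feas y /\ I \subset tight y) -> I \subset tight yI).
  move=> I; case: (classic (exists y, feas y /\ I \subset tight y)) => [[y [Fy HI]]|H].
    by exists y.
  by exists y0; split => // /H.
case/fin_all_exists => yI HyI.
pose pts (j : 'I_#|{: {set 'I_m}}|) := T *m yI (enum_val j) + t.
exists _, pts; split.
  by move=> j; exists (yI (enum_val j)); split => //; case: (HyI (enum_val j)).
pose PT := fun z => exists j, z = pts j.
suff H : forall N y, feas y -> (#|~: tight y| < N)%N -> conv PT (T *m y + t).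
  by move=> y Fy; apply: (H (#|~: tight y|).+1).
elim=> [//|N IH] y Fy HN.
set I := tight y.
case: (classic (exists y', [/\ feas y', I \subset tight y' & T *m y' != T *m y]))
  => [[y' [Fy' Hsub HT]]|Hno]; last first.
  apply: conv_pt; exists (enum_rank I); rewrite /pts enum_rankK.
  case: (HyI I) => FI /(_ (ex_intro _ y (conj Fy (subxx _)))) HI.
  congr (_ + _); apply/eqP; apply/negP => /negP ne; apply: Hno.
  by exists (yI I); split => //; rewrite eq_sym.
pose w := y' - y.
have Hw : forall k, k \in tight y -> (A *m w) k 0 = 0.
  move=> k kI; move/subsetP: Hsub => /(_ k kI); move: kI; rewrite !inE => /eqP h1 /eqP h2.
  by rewrite /w mulmxBr addE oppE h1 h2 subrr.
have Tw : T *m w != 0 by rewrite /w mulmxBr subr_eq0.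
have Hw' : forall k, k \in tight y -> (A *m (- w)) k 0 = 0.
  by move=> k kI; rewrite mulmxN oppE Hw // oppr0.
have Tw' : T *m (- w) != 0 by rewrite mulmxN oppr_eq0.
case: (step Fy Tw Hw) => mu1 [mu1p F1 P1].
case: (step Fy Tw' Hw') => mu2 [mu2p F2 P2].
have IH1 := IH _ F1 (leq_trans (card_lt P1) HN).
have IH2 := IH _ F2 (leq_trans (card_lt P2) HN).
pose a := mu2 / (mu1 + mu2).
have a01 : 0 <= a <= 1.
  have h : 0 < (mu1 + mu2)^-1 by rewrite invr_gt0; lra.
  apply/andP; split; first by apply: divr_ge0; lra.
  by rewrite ler_pdivrMr; lra.
have := conv_two IH1 IH2 a01.
congr (conv _ _); apply/matrixP => i j; rewrite ord1 !(addE, scaleE) !mulmx_comb mulmxN oppE.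
rewrite /a; field; lra.
Qed.

End Poly.

Lemma ext_polytope (R : realFieldType) (n : nat) (P : 'cV[R]_n -> Prop) m :
  ext_formulation P m -> (forall x, P x -> unit_cube x) -> polytope P.
Proof.
case=> d [A [b [T [t HP]]]] Hc.
have Hbd : forall y, feas A b y -> unit_cube (T *m y + t).
  by move=> y Fy; apply: Hc; apply/HP; exists y.
case: (main_poly Hbd) => k [pts [Hpts Hconv]].
exists k, pts => x; split.
  by case/HP => y [Fy ->]; apply: Hconv.
case=> k' [lam [pts' [Hl Hs Hp ->]]].
have : forall j, exists y, feas A b y /\ pts' j = T *m y + t.
  by move=> j; case: (Hp j) => j' ->; apply: Hpts.
case/fin_all_exists => ys Hys.
apply/HP; exists (\sum_j lam j *: ys j); split.
  by apply: feas_conv => // j; case: (Hys j).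
rewrite -img_conv //; apply: eq_bigr => j _; by case: (Hys j) => _ ->.
Qed.

Section Blocks.
Variable R : realFieldType.

Lemma col_ge0 p1 p2 (a : 'cV[R]_p1) (c : 'cV[R]_p2) :
  (forall k, 0 <= (col_mx a c) k 0) <-> (forall k, 0 <= a k 0) /\ (forall k, 0 <= c k 0).
Proof.
split.
  by move=> H; split => k; [have := H (lshift p2 k); rewrite col_mxEu | have := H (rshift p1 k); rewrite col_mxEd].
by case=> H1 H2 k; case: (split_ordP k) => k' ->; rewrite ?col_mxEu ?col_mxEd.
Qed.

Lemma col_eq0 p1 p2 q (a : 'M[R]_(p1, q)) (c : 'M[R]_(p2, q)) :
  col_mx a c = 0 <-> a = 0 /\ c = 0.
Proof.
split; first by move/eqP; rewrite col_mx_eq0 => /andP [/eqP -> /eqP ->].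
by case=> -> ->; apply/eqP; rewrite col_mx_eq0 !eqxx.
Qed.

Lemma mul_blockdiag p1 p2 q1 q2 (G1 : 'M[R]_(p1, q1)) (G2 : 'M[R]_(p2, q2)) (v1 : 'cV[R]_q1) (v2 : 'cV[R]_q2) :
  block_mx G1 0 0 G2 *m col_mx v1 v2 = col_mx (G1 *m v1) (G2 *m v2) :> 'cV[R]_(p1 + p2).
Proof. by rewrite mul_block_col !mul0mx addr0 add0r. Qed.

Lemma entry11 (M : 'M[R]_1) : M = (M 0 0)%:M.
Proof. by apply/matrixP => i j; rewrite !ord1 mxE eqxx mulr1n. Qed.

Lemma rowS_entry p q (M : 'M[R]_(1, p)) (N : 'M[R]_(1, q)) (v1 : 'cV[R]_p) (v2 : 'cV[R]_q) :
  (row_mx M N *m col_mx v1 v2) 0 0 = (M *m v1) 0 0 + (N *m v2) 0 0.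
Proof. by rewrite mul_row_col addE. Qed.

End Blocks.

Section Crep.
Variables (R : realFieldType) (n : nat) (Q : 'cV[R]_n -> Prop).
Local Notation pt := 'cV[R]_n.

Definition sfeas D e m (G : 'M[R]_(m, D)) (E : 'M[R]_(e, D)) (v : 'cV[R]_D) :=
  E *m v = 0 /\ forall k, 0 <= (G *m v) k 0.

Definition crep (f : mformula n) (m : nat) : Prop :=
  exists D e (G : 'M[R]_(m, D)) (E : 'M[R]_(e, D)) (X : 'M[R]_(n, D)) (S : 'rV[R]_D),
  (forall v, sfeas G E v ->
     [/\ 0 <= (S *m v) 0 0, ((S *m v) 0 0 = 0 -> X *m v = 0)
       & (0 < (S *m v) 0 0 -> fapply f Q (((S *m v) 0 0)^-1 *: (X *m v)))]) /\
  (forall x, fapply f Q x -> exists v, [/\ sfeas G E v, (S *m v) 0 0 = 1 & X *m v = x]).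

Lemma cone_sum D e m (G : 'M[R]_(m, D)) (E : 'M[R]_(e, D)) k (lam : 'I_k -> R) (vs : 'I_k -> 'cV[R]_D) :
  (forall j, 0 <= lam j) -> (forall j, sfeas G E (vs j)) -> sfeas G E (\sum_j lam j *: vs j).
Proof.
move=> Hl Hv; split.
  rewrite mulmx_sumr big1 // => j _; rewrite -scalemxAr; case: (Hv j) => -> _; exact: scaler0.
move=> kk; rewrite mulmx_sumr summxE; apply: sumr_ge0 => j _.
rewrite -scalemxAr scaleE; apply: mulr_ge0 => //; by case: (Hv j).
Qed.

Lemma lin_sum p D k (M : 'M[R]_(p, D)) (lam : 'I_k -> R) (vs : 'I_k -> 'cV[R]_D) :
  M *m (\sum_j lam j *: vs j) = \sum_j lam j *: (M *m vs j).
Proof. by rewrite mulmx_sumr; apply: eq_bigr => j _; rewrite scalemxAr. Qed.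

Lemma crep_and f1 f2 m1 m2 : crep f1 m1 -> crep f2 m2 -> crep (FAnd f1 f2) (m1 + m2).
Proof.
move=> [D1 [e1 [G1 [E1 [X1 [S1 [F1 C1]]]]]]] [D2 [e2 [G2 [E2 [X2 [S2 [F2 C2]]]]]]].
exists (D1 + D2)%N, (e1 + e2 + (n + 1))%N, (block_mx G1 0 0 G2),
  (col_mx (block_mx E1 0 0 E2) (col_mx (row_mx X1 (- X2)) (row_mx S1 (- S2)))),
  (row_mx X1 0), (row_mx S1 0).
have Eq : forall v1 v2, sfeas (block_mx G1 0 0 G2)
    (col_mx (block_mx E1 0 0 E2) (col_mx (row_mx X1 (- X2)) (row_mx S1 (- S2)))) (col_mx v1 v2)
  <-> [/\ sfeas G1 E1 v1, sfeas G2 E2 v2, X1 *m v1 = X2 *m v2 & S1 *m v1 = S2 *m v2].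
  move=> v1 v2; rewrite /sfeas mul_col_mx !mul_blockdiag mul_col_mx !mul_row_col !mulNmx.
  rewrite !col_eq0 col_ge0; split.
    case=> [[[h1 h2] [/eqP HX /eqP HS]] [H1 H2]]; move: HX HS; rewrite !subr_eq0 => /eqP HX /eqP HS.
    by split.
  by case=> [[-> H1] [-> H2] -> ->]; rewrite !subrr.
split.
  move=> v; rewrite -(vsubmxK v) => /Eq [Fv1 Fv2 HX HS].
  rewrite !mul_row_col !mul0mx !addr0.
  case: (F1 _ Fv1) => s0 s00 sp; case: (F2 _ Fv2); rewrite -HX -HS => _ _ sp2.
  by split => // Hs; split; [exact: sp | exact: sp2].
move=> x [/C1 [v1 [Fv1 S1v X1v]] /C2 [v2 [Fv2 S2v X2v]]].
exists (col_mx v1 v2); split.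
- apply/Eq; split => //; first by rewrite X1v X2v.
  by rewrite (entry11 (S1 *m v1)) (entry11 (S2 *m v2)) S1v S2v.
- by rewrite rowS_entry mul0mx [X in _ + X]mxE addr0.
- by rewrite mul_row_col mul0mx addr0.
Qed.


Lemma sfeas0 D e m (G : 'M[R]_(m, D)) (E : 'M[R]_(e, D)) : sfeas G E 0.
Proof. by split; [rewrite mulmx0 | move=> k; rewrite mulmx0 mxE]. Qed.

Lemma crep_or f1 f2 m1 m2 : crep f1 m1 -> crep f2 m2 -> crep (FOr f1 f2) (m1 + m2).
Proof.
move=> [D1 [e1 [G1 [E1 [X1 [S1 [F1 C1]]]]]]] [D2 [e2 [G2 [E2 [X2 [S2 [F2 C2]]]]]]].
exists (D1 + D2)%N, (e1 + e2)%N, (block_mx G1 0 0 G2), (block_mx E1 0 0 E2),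
  (row_mx X1 X2), (row_mx S1 S2).
have Eq : forall v1 v2, sfeas (block_mx G1 0 0 G2) (block_mx E1 0 0 E2) (col_mx v1 v2)
  <-> sfeas G1 E1 v1 /\ sfeas G2 E2 v2.
  move=> v1 v2; rewrite /sfeas !mul_blockdiag col_eq0 col_ge0; split.
    by case=> [[h1 h2] [H1 H2]].
  by case=> [[h1 H1] [h2 H2]].
split.
  move=> v; rewrite -(vsubmxK v) => /Eq [Fv1 Fv2].
  rewrite rowS_entry mul_row_col.
  case: (F1 _ Fv1) => a1 b1 c1; case: (F2 _ Fv2) => a2 b2 c2.
  set s1 : R := (S1 *m _) 0 0 in a1 b1 c1 *; set s2 : R := (S2 *m _) 0 0 in a2 b2 c2 *.
  split; first by apply: addr_ge0.
    by move=> h; rewrite b1 ?b2 ?addr0 //; lra.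
  move=> sp; move: a1 a2; rewrite !le_eqVlt => /orP [/eqP h1|h1] /orP [/eqP h2|h2].
  - by move: sp; rewrite -h1 -h2 addr0 ltxx.
  - by apply: conv_pt; right; rewrite -h1 add0r b1 // add0r; apply: c2.
  - by apply: conv_pt; left; rewrite -h2 addr0 b2 // addr0; apply: c1.
  - have a01 : 0 <= s1 / (s1 + s2) <= 1.
      have h : 0 < (s1 + s2)^-1 by rewrite invr_gt0.
      apply/andP; split; first by apply: divr_ge0; lra.
      by rewrite ler_pdivrMr; lra.
    pose U := fun x => fapply f1 Q x \/ fapply f2 Q x.
    have := conv_two (@conv_pt _ _ U _ (or_introl (c1 h1))) (@conv_pt _ _ U _ (or_intror (c2 h2))) a01.
    congr (conv _ _); apply/matrixP => i j; rewrite !(addE, scaleE).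
    have ne1 := lt0r_neq0 h1; have ne2 := lt0r_neq0 h2; have ne12 := lt0r_neq0 sp.
    by field; rewrite ?ne1 ?ne2 ?ne12.
move=> x [k [lam [pts [Hl Hs Hp ->]]]].
have : forall j, exists v, [/\ sfeas (block_mx G1 0 0 G2) (block_mx E1 0 0 E2) v,
    (row_mx S1 S2 *m v) 0 0 = 1 & row_mx X1 X2 *m v = pts j].
  move=> j; case: (Hp j) => [/C1 [v1 [Fv1 Sv Xv]] | /C2 [v2 [Fv2 Sv Xv]]].
    exists (col_mx v1 0); split; first by apply/Eq; split => //; apply: sfeas0.
      by rewrite rowS_entry mulmx0 [X in _ + X]mxE addr0.
    by rewrite mul_row_col mulmx0 addr0.
  exists (col_mx 0 v2); split; first by apply/Eq; split => //; apply: sfeas0.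
    by rewrite rowS_entry mulmx0 [X in X + _]mxE add0r.
  by rewrite mul_row_col mulmx0 add0r.
case/fin_all_exists => vs Hvs.
exists (\sum_j lam j *: vs j); split.
- by apply: cone_sum => // j; case: (Hvs j).
- rewrite lin_sum summxE -Hs; apply: eq_bigr => j _; rewrite scaleE.
  by case: (Hvs j) => _ -> _; rewrite mulr1.
- by rewrite lin_sum; apply: eq_bigr => j _; case: (Hvs j) => _ _ ->.
Qed.


Lemma crep_ext f m x0 : crep f m -> fapply f Q x0 -> ext_formulation (fapply f Q) m.
Proof.
move=> [D [e [G [E [X [S [F C]]]]]]] /C [v1 [[Ev1 Gv1] Sv1 Xv1]].
pose M := col_mx E S.
pose K := (kermx M^T)^T.
have MK : M *m K = 0 by rewrite /K -[M in M *m _]trmxK -trmx_mul mulmx_ker trmx0.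
have EK : E *m K = 0 by move: MK; rewrite /M mul_col_mx => /col_eq0 [].
have SK : S *m K = 0 by move: MK; rewrite /M mul_col_mx => /col_eq0 [].
exists D, (G *m K), (- (G *m v1)), (X *m K), (X *m v1) => x; split.
  case/C => v [[Ev Gv] Sv Xv].
  pose w := v - v1.
  have Mw : w^T *m M^T = 0.
    rewrite -trmx_mul /M mul_col_mx /w !mulmxBr Ev Ev1 subrr.
    rewrite (entry11 (S *m v)) (entry11 (S *m v1)) Sv Sv1 subrr.
    by apply/matrixP => a c; rewrite !mxE; case: (split _) => ?; rewrite !mxE ?mul0rn.
  move/sub_kermxP/submxP: Mw => [D' HD'].
  exists D'^T; split.
    move=> k; rewrite oppE -mulmxA.
    have -> : K *m D'^T = w by rewrite /K -trmx_mul -HD' trmxK.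
    rewrite /w mulmxBr addE oppE; have := Gv k; lra.
  rewrite -mulmxA; have -> : K *m D'^T = w by rewrite /K -trmx_mul -HD' trmxK.
  by rewrite /w mulmxBr subrK Xv.
case=> z [Hz ->].
pose v := v1 + K *m z.
have Fv : sfeas G E v.
  split; first by rewrite /v mulmxDr mulmxA EK mul0mx Ev1 addr0.
  by move=> k; have := Hz k; rewrite /v mulmxDr addE mulmxA oppE; lra.
have Sv : (S *m v) 0 0 = 1 by rewrite /v mulmxDr mulmxA SK mul0mx addr0.
case: (F v Fv); rewrite Sv => _ _ /(_ ltr01); rewrite invr1 scale1r.
by rewrite /v mulmxDr mulmxA addrC.
Qed.

End Crep.

Section Base.
Variables (R : realFieldType) (n : nat) (Q : 'cV[R]_n -> Prop) (d sigma : nat)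
  (A : 'M[R]_(sigma, d)) (b : 'cV[R]_sigma) (T : 'M[R]_(n, d)) (t : 'cV[R]_n).
Hypothesis HQ : forall x, Q x <-> exists y, feas A b y /\ x = T *m y + t.
Hypothesis Hcube : forall x, Q x -> unit_cube x.
Variables (q0 q1 : 'cV[R]_n).
Hypotheses (Hq0 : Q q0) (Hq1 : Q q1) (Hq : q0 != q1).

Lemma Hbd : forall y, feas A b y -> unit_cube (T *m y + t).
Proof. by move=> y Fy; apply: Hcube; apply/HQ; exists y. Qed.

Lemma hom (y : 'cV[R]_d) (s : R) : (forall k, s * b k 0 <= (A *m y) k 0) ->
  [/\ 0 <= s, (s = 0 -> T *m y = 0) & (0 < s -> Q (s^-1 *: (T *m y + s *: t)))].
Proof.
move=> H.
case/HQ: Hq0 => y0 [Fy0 _].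
split.
- case: (lerP 0 s) => // sn; exfalso.
  have cpos : 0 < (- s)^-1 by rewrite invr_gt0 oppr_gt0.
  have key : forall y', feas A b y' -> T *m y' = - ((- s)^-1 *: (T *m y)).
    move=> y' Fy'.
    have h0 : T *m (y' + (- s)^-1 *: y) = 0.
      apply: (rec_dir Hbd Fy') => k; rewrite mulmx_comb.
      have h := ler_wpM2l (ltW cpos) (H k).
      have e : (- s)^-1 * (s * b k 0) = - b k 0 by field; rewrite ?oppr_eq0 lt_eqF.
      have := Fy' k; rewrite e in h; lra.
    by move: h0; rewrite mulmxDr -scalemxAr => /eqP; rewrite addr_eq0 => /eqP.
  move: Hq; case/HQ: Hq0 => ya [Fa ->]; case/HQ: Hq1 => yb [Fb ->].
  by rewrite (key _ Fa) (key _ Fb) eqxx.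
- move=> s0; apply: (rec_dir Hbd Fy0) => k; have := H k; by rewrite s0 mul0r.
- move=> sp; apply/HQ; exists (s^-1 *: y); split.
    move=> k; rewrite -scalemxAr scaleE.
    have ip : 0 < s^-1 by rewrite invr_gt0.
    have := ler_wpM2l (ltW ip) (H k).
    by rewrite mulrA mulVf ?mul1r // lt0r_neq0.
  by rewrite scalerDr scalerA mulVf ?scale1r ?lt0r_neq0 // scalemxAr.
Qed.


Lemma rowcol_entry p (M : 'M[R]_(p, d)) (c : 'cV[R]_p) (y : 'cV[R]_d) (sv : 'cV[R]_1) k :
  (row_mx M c *m col_mx y sv) k 0 = (M *m y) k 0 + c k 0 * sv 0 0.
Proof. by rewrite mul_row_col addE [X in _ + X]mxE big_ord1. Qed.

Lemma XvE (y : 'cV[R]_d) (sv : 'cV[R]_1) :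
  row_mx T t *m col_mx y sv = T *m y + (sv 0 0) *: t.
Proof.
rewrite mul_row_col; congr (_ + _); apply/matrixP => r j.
by rewrite (ord1 j) [LHS]mxE big_ord1 scaleE mulrC.
Qed.

Lemma crep_var i : crep Q (FVar i) sigma.
Proof.
pose X := row_mx T t.
pose S : 'rV[R]_(d + 1) := row_mx 0 (const_mx 1).
exists (d + 1)%N, 1%N, (row_mx A (- b)), (row i X - S), X, S.
have SvE : forall (y : 'cV[R]_d) (sv : 'cV[R]_1), (S *m col_mx y sv) 0 0 = sv 0 0.
  by move=> y sv; rewrite /S rowcol_entry mul0mx !mxE mul1r add0r.
have EvE : forall (y : 'cV[R]_d) (sv : 'cV[R]_1), ((row i X - S) *m col_mx y sv) 0 0 = (X *m col_mx y sv) i 0 - sv 0 0.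
  by move=> y sv; rewrite mulmxBl addE oppE SvE -row_mul mxE.
have GvE : forall (y : 'cV[R]_d) (sv : 'cV[R]_1) k, (row_mx A (- b) *m col_mx y sv) k 0 = (A *m y) k 0 - sv 0 0 * b k 0.
  by move=> y sv k; rewrite rowcol_entry oppE mulNr mulrC.
split.
  move=> v; rewrite -(vsubmxK v); set y := usubmx v; set sv := dsubmx v.
  case=> HE HG; rewrite SvE.
  have Xi : (X *m col_mx y sv) i 0 = sv 0 0.
    by apply/eqP; rewrite -subr_eq0 -EvE HE mxE.
  have Hh : forall k, sv 0 0 * b k 0 <= (A *m y) k 0.
    by move=> k; have := HG k; rewrite GvE subr_ge0.
  case: (hom Hh) => h1 h2 h3; split => //.
    by move=> s0; rewrite /X XvE h2 // s0 scale0r addr0.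
  move=> sp; split; first by rewrite /X XvE; apply: h3.
  by rewrite scaleE Xi mulVf // lt0r_neq0.
move=> x [Qx xi]; case/HQ: Qx => y [Fy Hx].
have c1 : (const_mx 1 : 'M[R]_1) 0 0 = 1 by rewrite mxE.
exists (col_mx y (const_mx 1)); split; last first.
- by rewrite /X XvE c1 scale1r.
- by rewrite SvE c1.
split.
  rewrite (entry11 (_ *m _)) EvE /X XvE c1 scale1r -Hx xi subrr.
  by apply/matrixP => a c; rewrite !mxE mul0rn.
by move=> k; rewrite GvE c1 mul1r subr_ge0.
Qed.


Lemma crep_all f : crep Q f (fsize f * sigma).
Proof.
elim: f => [i|f1 IH1 f2 IH2|f1 IH1 f2 IH2] /=.
- by rewrite mul1n; apply: crep_var.
- by rewrite mulnDl; apply: crep_and.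
- by rewrite mulnDl; apply: crep_or.
Qed.

End Base.

Section Final.
Variables (R : realFieldType) (n : nat).
Local Notation pt := 'cV[R]_n.
Local Notation one := (const_mx 1 : pt).

Lemma feval_true (f : mformula n) : feval f (fun _ => true) = true.
Proof. by elim: f => //= f1 -> f2 ->. Qed.

Lemma one_in_S (f : mformula n) : fset_of f one.
Proof.
split; first by move=> i; right; rewrite mxE.
rewrite (@feval_ext _ f _ (fun _ => true)) ?feval_true // => i.
by rewrite mxE eqxx.
Qed.

Lemma fapply_one (Q : pt -> Prop) (f : mformula n) : Q one -> fapply f Q one.
Proof.
move=> Q1; elim: f => [i|f1 IH1 f2 IH2|f1 IH1 f2 IH2] /=.
- by split => //; rewrite mxE.
- by split.
- by apply: conv_pt; left.
Qed.

Lemma conv_single (U : pt -> Prop) c x : (forall z, U z -> z = c) -> U c -> (conv U x <-> x = c).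
Proof.
move=> HU Uc; split; last by move=> ->; apply: conv_pt.
case=> k [lam [pts [_ Hs Hp ->]]].
rewrite (eq_bigr (fun j => lam j *: c)) => [|j _]; last by rewrite (HU _ (Hp j)).
by rewrite -scaler_suml Hs scale1r.
Qed.

Lemma fapply_single (Q : pt -> Prop) (f : mformula n) x :
  (forall y, Q y -> y = one) -> Q one -> (fapply f Q x <-> x = one).
Proof.
move=> HQ Q1; elim: f x => [i|f1 IH1 f2 IH2|f1 IH1 f2 IH2] x /=.
- split; first by case=> /HQ.
  by move=> ->; split => //; rewrite mxE.
- by rewrite IH1 IH2; split => [[]|->].
- apply: conv_single; last by left; apply/IH1.
  by move=> z [/IH1|/IH2].
Qed.

End Final.

Unset Implicit Arguments.

Theorem theorem4p3 (R : realFieldType) (n : nat) (phi : mformula n)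
    (Q : 'cV[R]_n -> Prop) (p : nat) :
  convex Q ->
  (forall x, Q x -> unit_cube x) ->
  (forall x, fset_of phi x -> Q x) ->
  (satisfies_pitch Q (fset_of phi) p ->
     satisfies_pitch (fapply phi Q) (fset_of phi) p.+1) /\
  (forall sigma : nat, polytope Q -> ext_formulation Q sigma ->
     polytope (fapply phi Q) /\
     ext_formulation (fapply phi Q) (fsize phi * sigma)).
Proof.
move=> _ Hcube HS; split; first exact: part1.
move=> sigma _ Hext.
have Q1 : Q (const_mx 1) by apply: HS; apply: one_in_S.
case: (Classical_Prop.classic (exists q, Q q /\ q != const_mx 1)) => [[q [Qq Hq]]|Hno].
  have Hext' : ext_formulation (fapply phi Q) (fsize phi * sigma).
    case: Hext => d [A [b [T [t HQ]]]].
    exact: (crep_ext (crep_all HQ Hcube Qq Q1 Hq phi) (fapply_one phi Q1)).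
  split => //; apply: (ext_polytope Hext') => x Hx; exact: (fapply_cube Hcube Hx).
have HQ1 : forall y, Q y -> y = const_mx 1.
  by move=> y Qy; case: (eqVneq y (const_mx 1)) => // ne; case: Hno; exists y.
split.
  exists 1%N, (fun _ => const_mx 1) => x; rewrite fapply_single //.
  symmetry; apply: conv_single; [by move=> z [] | by exists ord0].
exists 0%N, 0, 0, 0, (const_mx 1) => x; rewrite fapply_single //; split.
  by move=> ->; exists 0; split => [i|]; rewrite ?mul0mx ?add0r // !mxE.
by case=> y [_ ->]; rewrite mul0mx add0r.
Qed.
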